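(* Let $\lambda>0$, $r\in(0,1)$, $U(w)=-e^{-\lambda w}$, and $\hat m_{\lambda,r}=\frac{r e^{\lambda}}{re^{\lambda}+1-r}$. For every $m\in[\hat m_{\lambda,r},1)$ and every $v\in[0,D(m)]$, if $X$ has distribution function $F_{m,v}$, then $\gamma=1$ maximizes $\mathbb E\,U(1+r+\gamma(X-r))$ over $\gamma\in[0,1]$; i.e. $\gamma^*_{\lambda,r}(m,v)=1$.
   Context: $D(m)=m-m^2$. For $0<v<D(m)$, $F_{m,v}$ is the distribution function of the Beta law with mean $m$ and variance $v$, i.e. Beta$(\alpha,\beta)$ with $\alpha=\frac{m(m-m^2-v)}{v}$, $\beta=\frac{(1-m)(m-m^2-v)}{v}$; $F_{m,0}$ is the distribution function of the Dirac mass at $m$; $F_{m,D(m)}(x)=1-m$ for $0\le x<1$ and $F_{m,D(m)}(1)=1$ (Bernoulli law with parameter $m$). Initial wealth is normalized to 1; $\gamma$ is the fraction invested in the risky return $X$, the rest earning the risk-free return $r$. *)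

(* Defs.v *)
From HB Require Import structures.
From mathcomp Require Import all_boot all_order all_algebra.
From mathcomp Require Import all_classical all_reals all_analysis.
Set Implicit Arguments. Unset Strict Implicit. Unset Printing Implicit Defensive.
Import Order.TTheory GRing.Theory Num.Theory.
Local Open Scope classical_set_scope.
Local Open Scope ring_scope.

Section defs.
Context {R : realType}.

Definition Dvar (m : R) : R := m - m ^+ 2.

(* Beta parameters with mean m and variance v *)
Definition beta_alpha (m v : R) : R := m * (m - m ^+ 2 - v) / v.
Definition beta_beta (m v : R) : R := (1 - m) * (m - m ^+ 2 - v) / v.

Definition beta_dens (a b : R) (x : R) : R := x `^ (a - 1) * (1 - x) `^ (b - 1).

Definition beta_expect (a b : R) (g : R -> R) : R :=
  fine (\int[lebesgue_measure]_(x in `]0, 1[) (g x * beta_dens a b x)%:E) /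
  fine (\int[lebesgue_measure]_(x in `]0, 1[) (beta_dens a b x)%:E).

(* E[g(X)] for X with distribution function F_{m,v}, 0 <= v <= D(m):
   Dirac at m if v = 0, Bernoulli(m) if v = D(m), Beta otherwise *)
Definition Fmv_expect (m v : R) (g : R -> R) : R :=
  if v == 0 then g m
  else if v == Dvar m then (1 - m) * g 0 + m * g 1
  else beta_expect (beta_alpha m v) (beta_beta m v) g.

Definition cara (lam : R) (w : R) : R := - expR (- lam * w).

Definition exp_util (lam r m v gamma : R) : R :=
  Fmv_expect m v (fun x => cara lam (1 + r + gamma * (x - r))).

Definition mhat (lam r : R) : R :=
  r * expR lam / (r * expR lam + 1 - r).

End defs.

(* Main.v *)
Require Import Defs.
From mathcomp Require Import all_boot all_order all_algebra.
From mathcomp Require Import all_classical all_reals all_analysis.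
Import Order.TTheory GRing.Theory Num.Theory.
From mathcomp Require Import ring lra.
Local Open Scope ring_scope.

Module H.
From mathcomp Require Import measurable_realfun.
Import numFieldNormedType.Exports.
Section helpers.
Context {R : realType}.

Lemma lin_le (lam r x : R) : 0 < lam -> 0 < r < 1 -> 0 <= x <= 1 ->
  - r + x * (r + (1 - r) * expR (- lam)) <= (x - r) * expR (- lam * x).
Proof.
move=> l0 /andP[r0 r1] /andP[x0 x1].
have e1 : expR (- lam * x) <= 1 by rewrite expR_le1; nra.
have e2 : expR (- lam) <= expR (- lam * x) by rewrite ler_expR; nra.
have e3 : 0 < expR (- lam) := expR_gt0 _.
have [xr|xr] := ltP x r.
  have h : 0 <= (r - x) * (1 - expR (- lam * x)) by apply: mulr_ge0; lra.
  have h2 : 0 <= x * (1 - r) * (1 - expR (- lam)) by apply: mulr_ge0; [apply: mulr_ge0|]; lra.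
  nra.
have h : 0 <= (x - r) * (expR (- lam * x) - expR (- lam)) by apply: mulr_ge0; lra.
have h2 : 0 <= r * (1 - x) * (1 - expR (- lam)) by apply: mulr_ge0; [apply: mulr_ge0|]; lra.
nra.
Qed.

Lemma aux_step (A B C : R) : 0 < A -> 1 + C <= B -> - (A * B) - - A <= A * - C.
Proof. move=> A0 h; have := ler_wpM2l (ltW A0) h; rewrite mulrDr mulr1 mulrN; lra. Qed.

Lemma pt_le (lam r g x : R) : 0 < lam -> 0 < r < 1 -> 0 <= g <= 1 -> 0 <= x <= 1 ->
  cara lam (1 + r + g * (x - r)) - cara lam (1 + r + 1 * (x - r)) <=
  (g - 1) * lam * expR (- lam) * (- r + x * (r + (1 - r) * expR (- lam))).
Proof.
move=> l0 hr /andP[g0 g1] hx.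
rewrite /cara.
set u := - lam * (1 + r + g * (x - r)).
set u1 := - lam * (1 + r + 1 * (x - r)).
have eu : expR u = expR u1 * expR (u - u1) by rewrite -expRD; congr expR; ring.
have h1 : 1 + (u - u1) <= expR (u - u1) := expR_ge1Dx _.
have eu1 : expR u1 = expR (- lam) * expR (- lam * x) by rewrite -expRD; congr expR; rewrite /u1; ring.
have p1 : 0 < expR u1 := expR_gt0 _.
have step : - expR u - - expR u1 <= (g - 1) * lam * expR (- lam) * ((x - r) * expR (- lam * x)).
  rewrite eu.
  have -> : (g - 1) * lam * expR (- lam) * ((x - r) * expR (- lam * x)) = expR u1 * (-(u - u1)) by rewrite eu1 /u /u1; ring.
  exact: aux_step.
apply: le_trans step _.
apply: ler_wnM2l; last exact: lin_le.
rewrite -mulrA; apply: mulr_le0_ge0; first lra.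
by apply: mulr_ge0; [lra| exact: expR_ge0].
Qed.
End helpers.

Section beta.
Context {R : realType}.
Variables (a b : R).
Hypotheses (a0 : 0 < a) (b0 : 0 < b).

Definition Fp (x : R) := x `^ a * (1 - x) `^ b.
Definition q (x : R) := (a - (a + b) * x) * beta_dens a b x.

Lemma omx_derive (x : R) : is_derive x 1 (fun y : R => 1 - y) (-1).
Proof.
have h : is_derive x 1 (cst 1 - id) (0 - 1) by apply: is_deriveB.
rewrite sub0r in h.
exact: h.
Qed.

Lemma Fp_derive (x : R) : 0 < x < 1 -> is_derive x 1 Fp (q x).
Proof.
move=> /andP[x0 x1].
have d1 : is_derive x 1 (@powR R ^~ a) (a * x `^ (a - 1)) := is_derive1_powR a x0.
have d2 : is_derive x 1 ((@powR R ^~ b) \o (fun y => 1 - y)) (b * (1 - x) `^ (b - 1) * -1).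
  apply: is_derive1_comp; last exact: omx_derive.
  by apply: is_derive1_powR; rewrite /= subr_gt0.
have d3 := is_deriveM d1 d2.
have -> : Fp = (@powR R ^~ a) * ((@powR R ^~ b) \o (fun y => 1 - y)) by apply/funext.
apply: is_derive_eq.
rewrite /q /beta_dens /=.
have hxa : x `^ a = x * x `^ (a - 1).
  have h1 := @powRD R x (a - 1) 1.
  rewrite subrK (gt_eqF x0) implybT powRr1 in h1; last exact: ltW.
  by rewrite h1 // mulrC.
have hxb : (1 - x) `^ b = (1 - x) * (1 - x) `^ (b - 1).
  have h : 0 < 1 - x by lra.
  have h1 := @powRD R (1 - x) (b - 1) 1.
  rewrite subrK (gt_eqF h) implybT powRr1 in h1; last exact: ltW.
  by rewrite h1 // mulrC.
rewrite hxa hxb /GRing.scale /=; ring.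
Qed.
End beta.

Section beta2.
Context {R : realType}.
Variables (a b : R).
Hypotheses (a0 : 0 < a) (b0 : 0 < b).
Local Open Scope classical_set_scope.

Lemma isd_cont (f : R -> R) (x d : R) : is_derive x 1 f d -> {for x, continuous f}.
Proof. move=> H; apply: differentiable_continuous; apply/derivable1_diffP; exact: ex_derive. Qed.

Lemma q_cont x : 0 < x < 1 -> {for x, continuous (q a b)}.
Proof.
move=> /andP[x0 x1].
have l : is_derive x 1 (cst a - (a + b) *: id) (0 - (a + b) *: 1).
  by apply: is_deriveB; apply: is_deriveZ.
have c1 : {for x, continuous (fun y : R => a - (a + b) * y)} by exact: isd_cont l.
have c2 : {for x, continuous (@powR R ^~ (a - 1))} by exact: isd_cont (is_derive1_powR _ x0).
have c3 : {for x, continuous ((@powR R ^~ (b - 1)) \o (fun y => 1 - y))}.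
  have h : 0 < 1 - x by lra.
  have hh := @is_derive1_comp R (@powR R ^~ (b - 1)) (fun y => 1 - y) x _ _ (is_derive1_powR (b - 1) h) (omx_derive x).
  exact: isd_cont hh.
exact: (continuousM c1 (continuousM c2 c3)).
Qed.

Lemma ftc_q c d : 0 < c -> c < d -> d < 1 ->
  (\int[lebesgue_measure]_(x in `[c, d]) (q a b x)%:E = (Fp a b d)%:E - (Fp a b c)%:E)%E.
Proof.
move=> c0 cd d1.
apply: continuous_FTC2 => //.
- apply: continuous_in_subspaceT => x; rewrite inE /= in_itv /= => /andP[h1 h2].
  apply: q_cont; apply/andP; split; lra.
- split.
  + move=> x; rewrite in_itv /= => /andP[h1 h2].
    apply: ex_derive; apply: Fp_derive => //; apply/andP; split; lra.
  + apply: cvg_at_right_filter; apply: isd_cont; apply: Fp_derive => //; apply/andP; split; lra.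
  + apply: cvg_at_left_filter; apply: isd_cont; apply: Fp_derive => //; apply/andP; split; lra.
- move=> x; rewrite in_itv /= => /andP[h1 h2].
  rewrite derive1E; apply: derive_val; apply: Fp_derive => //; apply/andP; split; lra.
Qed.
End beta2.

Section split.
Context {R : realType}.
Local Open Scope classical_set_scope.
Notation mu := (@lebesgue_measure R).

Lemma Rint_split (f : R -> R) (l c u : R) : l < c -> c < u ->
  mu.-integrable `]l, u[ (EFin \o f) ->
  Rintegral mu `]l, u[ f = Rintegral mu `]l, c] f + Rintegral mu `]c, u[ f.
Proof.
move=> lc cu hf.
have E : `]l, u[ = `]l, c] `|` `]c, u[ :> set R.
  by apply: itv_bndbnd_setU; rewrite bnd_simp ?ltW.
rewrite E Rintegral_setU //; first by rewrite -E.
apply/disj_setPS => x [] /=; rewrite !in_itv /= => /andP[_ h1] /andP[h2 _].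
by have := le_lt_trans h1 h2; rewrite ltxx.
Qed.
End split.

Section beta3.
Context {R : realType}.
Variables (a b : R).
Hypotheses (a0 : 0 < a) (b0 : 0 < b).
Local Open Scope classical_set_scope.
Notation mu := (@lebesgue_measure R).
Hypothesis hi : mu.-integrable `]0, 1[ (EFin \o beta_dens a b).

Lemma dens_ge0 x : 0 <= beta_dens a b x.
Proof. by rewrite /beta_dens mulr_ge0 // powR_ge0. Qed.

Lemma bnd_of (D : set R) (f : R -> R) M : (forall x, D x -> `|f x| <= M) -> [bounded f x | x in D].
Proof.
move=> H; exists M; split; first exact: num_real.
move=> y My x Dx; exact: le_trans (H x Dx) (ltW My).
Qed.

Lemma intM (k : R -> R) (M : R) : measurable_fun (`]0, 1[ : set R) k -> (forall x : R, `]0, 1[ x -> `|k x| <= M) ->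
  mu.-integrable `]0, 1[ (EFin \o (fun x => k x * beta_dens a b x)).
Proof.
move=> mk kM.
have := @integrableMr _ (measurableTypeR R) R mu _ (measurable_itv _) k _ mk (@bnd_of _ _ _ kM) hi.
by congr (_.-integrable _ _); apply/funext => x /=; rewrite EFinM.
Qed.

Lemma lin_meas (c d : R) : measurable_fun [set: R] (fun x : R => c + d * x).
Proof.
apply: continuous_measurable_fun => x.
have l : is_derive x 1 (cst c + d *: id) (0 + d *: 1).
  by apply: is_deriveD; apply: is_deriveZ.
exact: isd_cont l.
Qed.

Lemma q_int : mu.-integrable `]0, 1[ (EFin \o q a b).
Proof.
have -> : q a b = (fun x => (a + (- (a + b)) * x) * beta_dens a b x).
  by apply/funext => x; rewrite /q mulNr.
apply: (@intM _ (2 * a + b)).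
  by apply: measurable_funTS; exact: lin_meas.
move=> x; rewrite /= in_itv /= => /andP[x0 x1].
have A0 := a0; have B0 := b0.
have h1 : 0 <= (a + b) * x by apply: mulr_ge0; lra.
have h2 : 0 <= (a + b) * (1 - x) by apply: mulr_ge0; lra.
rewrite ler_norml; apply/andP; split; nra.
Qed.

Lemma mm_bounds : 0 < a / (a + b) < 1.
Proof.
have A0 := a0; have B0 := b0.
apply/andP; split; first by rewrite divr_gt0 //; lra.
by rewrite ltr_pdivrMr; lra.
Qed.

Lemma Fp_ge0 x : 0 <= Fp a b x.
Proof. by rewrite /Fp mulr_ge0 // powR_ge0. Qed.

Lemma qA : Rintegral mu `]0, a / (a + b)] (q a b) <= Fp a b (a / (a + b)).
Proof.
have A0 := a0; have B0 := b0.
have /andP[mm0 mm1] := mm_bounds.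
set mm := a / (a + b) in mm0 mm1 *.
have qpos : forall x, 0 < x <= mm -> 0 <= q a b x.
  move=> x /andP[x0 xm]; rewrite /q mulr_ge0 ?dens_ge0 // subr_ge0.
  by rewrite /mm ler_pdivlMr in xm; lra.
set Fs := fun n : nat => `[mm / (n.+2)%:R, mm] : set R.
have cn : forall n, 0 < mm / (n.+2)%:R < mm.
  move=> n; apply/andP; split; first by rewrite divr_gt0 // ltr0n.
  rewrite ltr_pdivrMr ?ltr0n //.
  have : (1 < (n.+2)%:R :> R) by rewrite ltr1n.
  nra.
have cup : \bigcup_n Fs n = `]0, mm].
  apply/seteqP; split.
  - move=> x [n _]; rewrite /Fs /= !in_itv /= => /andP[h1 h2]; apply/andP; split => //.
    by have /andP[c0 _] := cn n; exact: lt_le_trans c0 h1.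
  - move=> x; rewrite /= in_itv /= => /andP[x0 xm].
    exists (Num.truncn (mm / x)) => //; rewrite /Fs /= in_itv /= xm andbT.
    have h := truncnS_gt (mm / x).
    rewrite ltr_pdivrMr // in h.
    rewrite ler_pdivrMr ?ltr0n // -addn1 natrD.
    nra.
have mF : forall n, measurable (Fs n) by move=> n; exact: measurable_itv.
have nd : nondecreasing_seq Fs.
  apply/nondecreasing_seqP => n; rewrite subsetEset /Fs => x /=; rewrite !in_itv /= => /andP[h1 h2].
  rewrite h2 andbT; apply: le_trans h1.
  rewrite ler_pM2l // lef_pV2 ?posrE ?ltr0n // ler_nat.
  by [].
have qi := q_int.
have mq : measurable_fun (`]0, 1[ : set R) (EFin \o q a b) := measurable_int mu qi.
have mf : forall n, measurable_fun (Fs n) (EFin \o q a b).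
  move=> n; apply: measurable_funS mq => //.
  move=> x; rewrite /Fs /= !in_itv /= => /andP[h1 h2].
  by have /andP[c0 _] := cn n; apply/andP; split; [exact: lt_le_trans c0 h1 | exact: le_lt_trans h2 mm1].
have f0 : forall n x, Fs n x -> (0 <= (EFin \o q a b) x)%E.
  move=> n x; rewrite /Fs /= in_itv /= lee_fin => /andP[h1 h2]; apply: qpos.
  by have /andP[c0 _] := cn n; apply/andP; split; [exact: lt_le_trans c0 h1 | exact: h2].
have cv := @ge0_nondecreasing_set_cvg_integral _ (measurableTypeR R) R Fs (EFin \o q a b) mu nd mF mf f0.
have Hle : (\int[mu]_(x in `]0%R, mm]) (q a b x)%:E <= (Fp a b mm)%:E)%E.
  rewrite -cup -(cvg_lim _ cv) //.
  apply: lime_le; first by apply/cvg_ex; eexists; exact: cv.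
  apply: nearW => n /=.
  have /andP[c0 cm] := cn n.
  rewrite ftc_q // -EFinB lee_fin.
  have := Fp_ge0 (mm / n.+2%:R); lra.
have sub : `]0, mm] `<=` `]0, 1[.
  by move=> x; rewrite /= !in_itv /= => /andP[h1 h2]; apply/andP; split => //; exact: le_lt_trans h2 mm1.
have qi2 : mu.-integrable `]0, mm] (EFin \o q a b).
  exact: integrableS qi.
have fin1 := @integrable_fin_num _ (measurableTypeR R) R mu _ (measurable_itv _) _ qi2.
exact: (fine_le fin1 _ Hle).
Qed.

Lemma qB e : 0 < e -> a / (a + b) < 1 - e ->
  Rintegral mu `]a / (a + b), 1[ (q a b) <= Fp a b (1 - e) - Fp a b (a / (a + b)).
Proof.
have A0 := a0; have B0 := b0.
have /andP[mm0 mm1] := mm_bounds.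
set mm := a / (a + b) in mm0 mm1 *.
move=> e0 me.
have qneg : forall x, mm <= x -> 0 <= - q a b x.
  move=> x xm; rewrite /q -mulNr mulr_ge0 ?dens_ge0 // oppr_ge0 subr_le0.
  by rewrite /mm ler_pdivrMr in xm; lra.
have qi := q_int.
have qi1 : mu.-integrable `]mm, 1[ (EFin \o q a b).
  apply: integrableS qi => //.
  by move=> x; rewrite /= !in_itv /= => /andP[h1 h2]; apply/andP; split => //; exact: lt_trans mm0 h1.
rewrite (@Rint_split _ _ _ (1 - e)) //; last lra.
have qi2 : mu.-integrable `]mm, 1 - e] (EFin \o q a b).
  apply: integrableS qi1 => //.
  by move=> x; rewrite /= !in_itv /= => /andP[h1 h2]; apply/andP; split => //; lra.
have qi3 : mu.-integrable `]1 - e, 1[ (EFin \o q a b).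
  apply: integrableS qi1 => //.
  by move=> x; rewrite /= !in_itv /= => /andP[h1 h2]; apply/andP; split => //; lra.
rewrite Rintegral_itv_obnd_cbnd //.
have -> : Rintegral mu `[mm, 1 - e] (q a b) = Fp a b (1 - e) - Fp a b mm.
  by rewrite /Rintegral ftc_q //; lra.
have : 0 <= Rintegral mu `]1 - e, 1[ (fun x => -1 * q a b x).
  apply: Rintegral_ge0 => x; rewrite /= in_itv /= => /andP[h1 h2].
  rewrite mulN1r; apply: qneg; lra.
rewrite RintegralZl //; lra.
Qed.

Lemma Fp_small e : 0 < e < 1 -> Fp a b (1 - e) <= e `^ b.
Proof.
move=> /andP[e0 e1].
rewrite /Fp (_ : 1 - (1 - e) = e); last by ring.
have h : (1 - e) `^ a <= 1.
  have := @ge0_ler_powR R a (ltW a0) (1 - e) 1.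
  rewrite !nnegrE powR1 => ->; lra.
rewrite -[leRHS]mul1r; apply: ler_wpM2r => //; exact: powR_ge0.
Qed.

Lemma q_le0 : Rintegral mu `]0, 1[ (q a b) <= 0.
Proof.
have A0 := a0; have B0 := b0.
have /andP[mm0 mm1] := mm_bounds.
have key : forall e, 0 < e -> a / (a + b) < 1 - e -> Rintegral mu `]0, 1[ (q a b) <= e `^ b.
  move=> e e0 me.
  rewrite (@Rint_split _ _ _ (a / (a + b))) //; last exact: q_int.
  have h1 := qA; have h2 := @qB e e0 me; have h3 := @Fp_small e.
  have : e < 1 by lra.
  move=> e1; have := h3 (introT andP (conj e0 e1)); lra.
set s := Rintegral mu `]0, 1[ (q a b) in key *.
rewrite leNgt; apply/negP => s0.
set e := Num.min ((1 - a / (a + b)) / 2) ((s / 2) `^ (b^-1)).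
have e0 : 0 < e by rewrite lt_min; apply/andP; split; [lra | apply: powR_gt0; lra].
have eA : e <= (1 - a / (a + b)) / 2 by rewrite ge_min lexx.
have eB : e <= (s / 2) `^ (b^-1) by rewrite ge_min lexx orbT.
have := key e e0 ltac:(lra).
have : e `^ b <= s / 2.
  have := @ge0_ler_powR R b (ltW b0) e ((s / 2) `^ (b^-1)).
  rewrite !nnegrE -powRrM mulVf ?gt_eqF // powRr1; last lra.
  move=> ->; [by [] | exact: ltW | exact: powR_ge0 | exact: eB].
lra.
Qed.
End beta3.


Section beta4.
Context {R : realType}.
Local Open Scope classical_set_scope.
Notation mu := (@lebesgue_measure R).

Lemma dens_meas (a b : R) : measurable_fun [set: R] (beta_dens a b).
Proof.
apply: measurable_funM; first exact: measurable_powR.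
change (measurable_fun [set: R] ((@powR R ^~ (b - 1)) \o (fun x => 1 - x))).
apply: measurableT_comp; first exact: measurable_powR.
apply: continuous_measurable_fun => x.
exact: isd_cont (omx_derive x).
Qed.

Lemma dens_int (a b : R) :
  fine (\int[mu]_(x in `]0%R, 1%R[) (beta_dens a b x)%:E)%E != 0 ->
  mu.-integrable `]0, 1[ (EFin \o beta_dens a b).
Proof.
move=> h; apply/integrableP; split.
  by apply/measurable_EFinP; apply: measurable_funTS; exact: dens_meas.
have -> : (fun x => `|(EFin \o beta_dens a b) x|)%E = (EFin \o beta_dens a b).
  by apply/funext => x /=; rewrite ger0_norm // dens_ge0.
rewrite -ge0_fin_numE; last by apply: integral_ge0 => x _; rewrite lee_fin dens_ge0.
move: h; apply: contraNT; rewrite fin_numE negb_and !negbK => /orP[] /eqP -> //.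
Qed.
End beta4.

Section beta5.
Context {R : realType}.
Local Open Scope classical_set_scope.
Notation mu := (@lebesgue_measure R).

Definition I01 : set R := `]0%R, 1%R[.

Lemma le_R01 (f g : R -> R) : mu.-integrable I01 (EFin \o f) -> mu.-integrable I01 (EFin \o g) ->
  (forall x, 0 < x < 1 -> f x <= g x) -> Rintegral mu I01 f <= Rintegral mu I01 g.
Proof.
move=> If Ig H; apply: (@le_Rintegral _ (measurableTypeR R) R mu I01 f g (measurable_itv _) If Ig).
by move=> x; rewrite /I01 /= in_itv /=; exact: H.
Qed.

Lemma B_R01 (f g : R -> R) : mu.-integrable I01 (EFin \o f) -> mu.-integrable I01 (EFin \o g) ->
  Rintegral mu I01 (fun x => f x - g x) = Rintegral mu I01 f - Rintegral mu I01 g.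
Proof. by move=> If Ig; apply: (@RintegralB _ (measurableTypeR R) R mu I01 f g (measurable_itv _) If Ig). Qed.

Lemma D_R01 (f g : R -> R) : mu.-integrable I01 (EFin \o f) -> mu.-integrable I01 (EFin \o g) ->
  Rintegral mu I01 (fun x => f x + g x) = Rintegral mu I01 f + Rintegral mu I01 g.
Proof. by move=> If Ig; apply: (@RintegralD _ (measurableTypeR R) R mu I01 f g (measurable_itv _) If Ig). Qed.

Lemma Z_R01 (f : R -> R) r : mu.-integrable I01 (EFin \o f) ->
  Rintegral mu I01 (fun x => r * f x) = r * Rintegral mu I01 f.
Proof. by move=> If; apply: (@RintegralZl _ (measurableTypeR R) R mu I01 f r (measurable_itv _) If). Qed.

Lemma iB_R01 (f g : R -> R) : mu.-integrable I01 (EFin \o f) -> mu.-integrable I01 (EFin \o g) ->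
  mu.-integrable I01 (EFin \o (fun x => f x - g x)).
Proof.
move=> If Ig; have := @integrableB _ (measurableTypeR R) R mu I01 (measurable_itv _) _ _ If Ig.
by congr (_.-integrable _ _); apply/funext => x /=; rewrite EFinB.
Qed.

Lemma iZ_R01 (f : R -> R) r : mu.-integrable I01 (EFin \o f) ->
  mu.-integrable I01 (EFin \o (fun x => r * f x)).
Proof.
move=> If; have := @integrableZl _ (measurableTypeR R) R mu I01 (measurable_itv _) r _ If.
by congr (_.-integrable _ _); apply/funext => x /=; rewrite EFinM.
Qed.

Lemma eq_R01 (f g : R -> R) : (forall x, 0 < x < 1 -> f x = g x) ->
  Rintegral mu I01 f = Rintegral mu I01 g.
Proof.
move=> H; apply: eq_Rintegral => x; rewrite inE /I01 /= in_itv /=; exact: H.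
Qed.

Lemma beta_main (a b : R) (f1 f2 : R -> R) (c p0 p1 : R) :
  0 < a -> 0 < b ->
  measurable_fun [set: R] f1 -> measurable_fun [set: R] f2 ->
  (forall x, 0 < x < 1 -> `|f1 x| <= 1) -> (forall x, 0 < x < 1 -> `|f2 x| <= 1) ->
  (forall x, 0 < x < 1 -> f1 x - f2 x <= c * (p0 + p1 * x)) ->
  c <= 0 -> 0 <= p1 -> 0 <= p0 + p1 * (a / (a + b)) ->
  beta_expect a b f1 <= beta_expect a b f2.
Proof.
move=> a0 b0 mf1 mf2 bf1 bf2 hle c0 p1ge hp.
rewrite /beta_expect.
have [D0|D0] := eqVneq (fine (\int[mu]_(x in `]0%R, 1%R[) (beta_dens a b x)%:E)%E) 0.
  by rewrite D0 invr0 !mulr0.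
have hi := @dens_int R a b D0.
have Dge : 0 <= fine (\int[mu]_(x in `]0%R, 1%R[) (beta_dens a b x)%:E)%E.
  by apply: fine_ge0; apply: integral_ge0 => x _; rewrite lee_fin dens_ge0.
apply: ler_wpM2r; first by rewrite invr_ge0.
change (Rintegral mu `]0, 1[ (fun x => f1 x * beta_dens a b x) <=
        Rintegral mu `]0, 1[ (fun x => f2 x * beta_dens a b x)).
have bnd1 : forall (f : R -> R), (forall x, 0 < x < 1 -> `|f x| <= 1) ->
    forall x : R, `]0%R, 1%R[ x -> `|f x| <= 1.
  by move=> f hf x; rewrite /= in_itv /=; exact: hf.
have I1 := @intM R a b hi f1 1 (measurable_funTS mf1) (bnd1 _ bf1).
have I2 := @intM R a b hi f2 1 (measurable_funTS mf2) (bnd1 _ bf2).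
set mm := a / (a + b) in hp.
have Ilin : forall u v, mu.-integrable `]0, 1[ (EFin \o (fun x => (u + v * x) * beta_dens a b x)).
  move=> u v; apply: (@intM R a b hi _ (`|u| + `|v|)); first by apply: measurable_funTS; exact: lin_meas.
  move=> x; rewrite /= in_itv /= => /andP[x0 x1].
  apply: le_trans (ler_normD _ _) _; rewrite normrM lerD2l.
  rewrite -[leRHS]mulr1 ler_wpM2l // ger0_norm; lra.
change (Rintegral mu I01 (fun x => f1 x * beta_dens a b x) <=
        Rintegral mu I01 (fun x => f2 x * beta_dens a b x)).
rewrite -subr_le0 -B_R01 //.
apply: le_trans (le_R01 _ (fun x => (c * p0 + c * p1 * x) * beta_dens a b x) (iB_R01 _ _ I1 I2) (Ilin _ _) _) _.
  move=> x hx; rewrite -mulrBl; apply: ler_wpM2r; first exact: dens_ge0.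
  by have := hle x hx; rewrite mulrDr mulrA.
rewrite (eq_R01 _ (fun x => c * ((p0 + p1 * x) * beta_dens a b x))); last by move=> x _; ring.
rewrite Z_R01; last exact: Ilin.
apply: mulr_le0_ge0 => //.
have ab0 : a + b != 0 by rewrite gt_eqF // addr_gt0.
rewrite (eq_R01 _ (fun x => (p0 + p1 * mm) * beta_dens a b x + p1 * (- (a + b)^-1 * q a b x))); last first.
  by move=> x _; rewrite /q /mm; field.
have qi := @q_int R a b a0 b0 hi.
rewrite D_R01; [ | exact: iZ_R01 hi | exact/iZ_R01/iZ_R01/qi].
rewrite Z_R01 // Z_R01; last exact/iZ_R01/qi.
rewrite Z_R01 //.
have hq := @q_le0 R a b a0 b0 hi.
have hD : 0 <= Rintegral mu I01 (beta_dens a b).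
  by apply: Rintegral_ge0 => x _; exact: dens_ge0.
have hinv : 0 < (a + b)^-1 by rewrite invr_gt0 addr_gt0.
apply: addr_ge0; first exact: mulr_ge0.
apply: mulr_ge0 => //.
rewrite mulNr -mulrN; apply: mulr_ge0; first exact: ltW.
by rewrite oppr_ge0.
Qed.
End beta5.


Section final.
Context {R : realType}.

Lemma cara_lin_meas (A B : R) : measurable_fun [set: R] (fun x : R => - expR (A + B * x)).
Proof.
apply: continuous_measurable_fun => x.
have l : is_derive x 1 (cst A + B *: id) (0 + B *: 1) by apply: is_deriveD; apply: is_deriveZ.
have c1 := continuous_comp (isd_cont _ _ _ l) (@continuous_expR R _).
exact: cvgN c1.
Qed.

End final.
End H.

Theorem proposition8 (R : realType) (lam r m v : R) :
  0 < lam -> 0 < r < 1 ->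
  mhat lam r <= m < 1 -> 0 <= v <= Dvar m ->
  forall gamma : R, 0 <= gamma <= 1 ->
    exp_util lam r m v gamma <= exp_util lam r m v 1.
Proof.
move=> l0 hr /andP[hm m1] /andP[v0 vD] g hg.
have /andP[r0 r1] := hr.
have /andP[g0 g1] := hg.
have e0 : 0 < expR (- lam) := expR_gt0 _.
have E0 : 0 < expR lam := expR_gt0 _.
have eE : expR (- lam) * expR lam = 1 by rewrite -expRD addNr expR0.
set e := expR (- lam) in e0 eE *.
set c := (g - 1) * lam * e.
have c0 : c <= 0.
  rewrite /c -mulrA; apply: mulr_le0_ge0; first lra.
  by apply: mulr_ge0; lra.
have den0 : 0 < r * expR lam + 1 - r.
  have : 0 < r * expR lam by apply: mulr_gt0.
  lra.
have mh0 : 0 < mhat lam r by rewrite /mhat divr_gt0 // mulr_gt0.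
have m0 : 0 < m by exact: lt_le_trans mh0 hm.
have Pm : 0 <= - r + m * (r + (1 - r) * e).
  rewrite /mhat ler_pdivrMr // in hm.
  have h : 0 <= (- r + m * (r + (1 - r) * e)) * expR lam.
    have -> : (- r + m * (r + (1 - r) * e)) * expR lam =
              m * (r * expR lam + 1 - r) - r * expR lam.
      have -> : m * (r * expR lam + 1 - r) = m * (r * expR lam) + m * (1 - r) * (e * expR lam).
        by rewrite eE; ring.
      ring.
    lra.
  by rewrite pmulr_lge0 in h.
have cPm : c * (- r + m * (r + (1 - r) * e)) <= 0 by apply: mulr_le0_ge0.
have pt : forall x, 0 <= x <= 1 ->
    cara lam (1 + r + g * (x - r)) - cara lam (1 + r + 1 * (x - r)) <=
    c * (- r + x * (r + (1 - r) * e)).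
  by move=> x hx; exact: H.pt_le.
rewrite /exp_util /Fmv_expect.
case: ifP => [_|vn0].
  have h := pt m ltac:(apply/andP; split; lra); lra.
case: ifP => [_|vnD].
  have h0 := pt 0 ltac:(apply/andP; split; lra).
  have h1 := pt 1 ltac:(apply/andP; split; lra).
  have k0 := ler_wpM2l (_ : 0 <= 1 - m) h0.
  have k1 := ler_wpM2l (ltW m0) h1.
  have eq1 : (1 - m) * (c * (- r + 0 * (r + (1 - r) * e))) + m * (c * (- r + 1 * (r + (1 - r) * e))) =
             c * (- r + m * (r + (1 - r) * e)) by ring.
  have k0' := k0 ltac:(lra).
  move: k0' k1 eq1 cPm.
  set A0 := cara lam (1 + r + g * (0 - r)); set A1 := cara lam (1 + r + 1 * (0 - r)).
  set B0 := cara lam (1 + r + g * (1 - r)); set B1 := cara lam (1 + r + 1 * (1 - r)).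
  move=> k0' k1 eq1 cPm.
  clearbody A0 A1 B0 B1 c e; lra.
have vpos : 0 < v by rewrite lt_neqAle eq_sym vn0 v0.
have K : 0 < m - m ^+ 2 - v.
  have : v < Dvar m by rewrite lt_neqAle vnD vD.
  rewrite /Dvar; lra.
have a0 : 0 < beta_alpha m v by rewrite /beta_alpha divr_gt0 // mulr_gt0.
have b0 : 0 < beta_beta m v by rewrite /beta_beta divr_gt0 // mulr_gt0 // subr_gt0.
have mean : beta_alpha m v / (beta_alpha m v + beta_beta m v) = m.
  rewrite /beta_alpha /beta_beta; field.
  rewrite gt_eqF //=; apply/negP => /eqP h; lra.
have cb : forall w, 0 <= w -> `|cara lam w| <= 1.
  move=> w w0; rewrite /cara normrN ger0_norm ?expR_ge0 // expR_le1.
  by rewrite mulNr oppr_le0 mulr_ge0 // ltW.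
have ww : forall (k x : R), 0 <= k <= 1 -> 0 < x < 1 -> 0 <= 1 + r + k * (x - r).
  move=> k x /andP[k0 k1] /andP[x0 x1].
  have : 0 <= k * x by apply: mulr_ge0; lra.
  have : k * r <= r by rewrite ler_piMl //; lra.
  lra.
have lm : forall k, measurable_fun [set: R] (fun x => cara lam (1 + r + k * (x - r))).
  move=> k.
  have -> : (fun x => cara lam (1 + r + k * (x - r))) =
            (fun x => - expR ((- lam * (1 + r - k * r)) + (- lam * k) * x)).
    by apply/funext => x; rewrite /cara; congr (- expR _); ring.
  exact: H.cara_lin_meas.
apply: (@H.beta_main R _ _ _ _ c (- r) (r + (1 - r) * e)) => //.
- by move=> x hx; apply: cb; apply: ww.
- by move=> x hx; apply: cb; apply: ww => //; lra.
- move=> x /andP[x0 x1]; rewrite (mulrC _ x); apply: pt; lra.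
- by apply: addr_ge0; [lra | apply: mulr_ge0; lra].
- by rewrite mean mulrC.
Qed.
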